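(* Consider the Normal Partizan Domination game on a star $K_{1,n}$ whose universal (center) vertex has color $C$, with $a$ leaves of color $A$, $b$ leaves of color $B$ and $c=n-a-b\geq 1$ leaves of color $C$, where $a+b\geq 1$. If $c$ is even, the value equals the value of the game on the star obtained by removing the $c$ leaves of color $C$. If $c$ is odd: if $a=b$ the value is $*$; if $|a-b|=1$ the value is $*2$; if $a\geq b+2$ the value is $\left\{0,\uparrow^{[a-b-1]}*\ \big|\ 0,\uparrow^{[a-b-1]}*\right\}$; if $b\geq a+2$ the value is $\left\{0,\downarrow_{[b-a-1]}*\ \big|\ 0,\downarrow_{[b-a-1]}*\right\}$.
   Context: Normal Partizan Domination game: a finite graph $G$ has each vertex colored $A$, $B$ or $C$. Alice and Bob alternately select a vertex; Alice may only select vertices colored $A$ or $C$, Bob only vertices colored $B$ or $C$. A vertex $u$ dominates $v$ if $u=v$ or $uv$ is an edge. A vertex may be selected only if it is playable, i.e. it dominates at least one vertex not dominated by the previously selected vertices; the game ends when the selected vertices form a dominating set. Under normal play the player unable to move loses. The game is regarded as a partizan combinatorial game with Alice as Left and Bob as Right, and its value is its value in Conway's combinatorial game theory ($\{X\mid Y\}$ has Left options $X$ and Right options $Y$; $G=H$ iff $G+(-H)$ is a second-player win). Notation: $*=\{0\mid 0\}$, $*2=\{0,*\mid 0,*\}$, $\uparrow=\{0\mid *\}$, $\downarrow=\{*\mid 0\}$; $\uparrow^{[1]}=\uparrow$, $\uparrow^{[m]}=\{\uparrow^{[m-1]}\mid *\}$ for $m\geq 2$; $\downarrow_{[1]}=\downarrow$,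 $\downarrow_{[m]}=\{*\mid \downarrow_{[m-1]}\}$ for $m\geq 2$; $J*$ denotes $J+*$. *)

(* Defs.v *)
From Stdlib Require Import List.
From mathcomp Require Import all_boot.
Set Implicit Arguments. Unset Strict Implicit. Unset Printing Implicit Defensive.

(** * Short combinatorial games (Conway), Left = Alice, Right = Bob *)
Inductive game : Type := Game : seq game -> seq game -> game.

Definition lefts (G : game) : seq game := let: Game l _ := G in l.
Definition rights (G : game) : seq game := let: Game _ r := G in r.

Fixpoint neg (G : game) : game :=
  match G with Game l r => Game (map neg r) (map neg l) end.

(** disjunctive sum: G + H = { G^L + H, G + H^L | G^R + H, G + H^R } *)
Fixpoint add (G H : game) {struct G} : game :=
  let fix addG (H : game) : game :=
    match H with Game hl hr =>
      match G with Game gl gr =>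
        Game (map (fun g => add g H) gl ++ map addG hl)
             (map (fun g => add g H) gr ++ map addG hr)
      end
    end in addG H.

(** Normal play: Left moving first wins iff some Left option is such that
    every Right option of it is again a Left-first win (and Right, having
    no move, loses). *)
Inductive left_first_wins : game -> Prop :=
  LFW G GL : List.In GL (lefts G) ->
    (forall GLR, List.In GLR (rights GL) -> left_first_wins GLR) ->
    left_first_wins G.

Inductive right_first_wins : game -> Prop :=
  RFW G GR : List.In GR (rights G) ->
    (forall GRL, List.In GRL (lefts GR) -> right_first_wins GRL) ->
    right_first_wins G.

Definition second_player_win (G : game) : Prop :=
  ~ left_first_wins G /\ ~ right_first_wins G.

Definition game_eq (G H : game) : Prop := second_player_win (add G (neg H)).

Definition zero : game := Game [::] [::].
Definition star : game := Game [:: zero] [:: zero].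
Definition star2 : game := Game [:: zero; star] [:: zero; star].
Definition up : game := Game [:: zero] [:: star].
Definition down : game := Game [:: star] [:: zero].

(** upn m = up^[m] for m >= 1 (up^[1] = up, up^[m] = {up^[m-1] | *});
    upn 0 is a meaningless junk value (= up). *)
Fixpoint upn (m : nat) : game :=
  match m with
  | 0 => up
  | S k => match k with 0 => up | _ => Game [:: upn k] [:: star] end
  end.

Fixpoint downn (m : nat) : game :=
  match m with
  | 0 => down
  | S k => match k with 0 => down | _ => Game [:: star] [:: downn k] end
  end.

Inductive color : Type := CA | CB | CC.

Definition isA (c : color) : bool := if c is CA then true else false.
Definition isB (c : color) : bool := if c is CB then true else false.
Definition isC (c : color) : bool := if c is CC then true else false.
Definition alice_col (c : color) : bool := ~~ isB c.
Definition bob_col (c : color) : bool := ~~ isA c.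

Section Domination.
Variables (V : finType) (adj : rel V) (col : V -> color).

Definition cnbhd (v : V) : {set V} := [set u | (u == v) || adj v u].

(** the game from position D (set of already dominated vertices); k is
    fuel: each move dominates at least one new vertex, so #|V| suffices. *)
Fixpoint dom_game_from (k : nat) (D : {set V}) : game :=
  match k with
  | 0 => Game [::] [::]
  | S k' =>
    Game [seq dom_game_from k' (D :|: cnbhd v)
           | v <- enum V & alice_col (col v) && ~~ (cnbhd v \subset D)]
         [seq dom_game_from k' (D :|: cnbhd v)
           | v <- enum V & bob_col (col v) && ~~ (cnbhd v \subset D)]
  end.

Definition dom_game : game := dom_game_from #|V| set0.
End Domination.

(** * Stars: leaves indexed by a finType L, center = None *)
Definition star_adj (L : finType) : rel (option L) :=
  fun x y => (x == None) != (y == None).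

Definition star_col (L : finType) (col : L -> color) (v : option L) : color :=
  if v is Some l then col l else CC.

Definition star_game (L : finType) (col : L -> color) : game :=
  dom_game (@star_adj L) (star_col col).

(* Main.v *)
Require Import Defs.
From mathcomp Require Import all_boot zify.
Set Implicit Arguments. Unset Strict Implicit. Unset Printing Implicit Defensive.



Inductive le : game -> game -> Prop :=
| LeI G H : (forall x, List.In x (lefts G) -> lf x H) ->
            (forall y, List.In y (rights H) -> lf G y) -> le G H
with lf : game -> game -> Prop :=
| LfL G H x : List.In x (lefts H) -> le G x -> lf G H
| LfR G H y : List.In y (rights G) -> le y H -> lf G H.

Fixpoint gsize (G : game) : nat :=
  match G with Game l r => (sumn (map gsize l) + sumn (map gsize r)).+1 end.

Lemma In_sumn (f : game -> nat) l x : List.In x l -> f x <= sumn (map f l).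
Proof.
elim: l => //= y l IH [->|/IH]; lia.
Qed.

Lemma gsize_l G x : List.In x (lefts G) -> gsize x < gsize G.
Proof. case: G => l r /= /(In_sumn gsize); lia. Qed.
Lemma gsize_r G x : List.In x (rights G) -> gsize x < gsize G.
Proof. case: G => l r /= /(In_sumn gsize); lia. Qed.

Lemma gsize_pos G : 0 < gsize G.
Proof. by case: G. Qed.

Lemma le_refl G : le G G.
Proof.
have H: forall n G0, gsize G0 <= n -> le G0 G0.
  elim=> [|n IH] G0 Hs; first by have := gsize_pos G0; lia.
  constructor => x Hx.
  - apply: (LfL Hx); apply: IH; have := gsize_l Hx; lia.
  - apply: (LfR Hx); apply: IH; have := gsize_r Hx; lia.
exact: (H _ G (leqnn _)).
Qed.

Lemma leL G H : le G H -> forall x, List.In x (lefts G) -> lf x H.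
Proof. by destruct 1. Qed.
Lemma leR G H : le G H -> forall y, List.In y (rights H) -> lf G y.
Proof. by destruct 1. Qed.
Lemma lfE G H : lf G H ->
  (exists2 x, List.In x (lefts H) & le G x) \/ (exists2 y, List.In y (rights G) & le y H).
Proof. destruct 1; [left|right]; eauto. Qed.

Lemma le_trans_all n : forall G H K, gsize G + gsize H + gsize K <= n ->
  (le G H -> le H K -> le G K) /\ (le G H -> lf H K -> lf G K) /\
  (lf G H -> le H K -> lf G K).
Proof.
elim: n => [|n IH] G H K Hs.
  by have := gsize_pos G; lia.
split; [|split].
- move=> GH HK; constructor.
  + move=> x Hx; have Hxh := leL GH Hx.
    have := gsize_l Hx => ?.
    exact: ((IH x H K ltac:(lia)).2.2 Hxh HK).
  + move=> y Hy. have Hhy := leR HK Hy. have := gsize_r Hy => ?.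
    exact: ((IH G H y ltac:(lia)).2.1 GH Hhy).
- move=> GH /lfE [[x Hx Hhx]|[y Hy Hyk]].
  + apply: (LfL Hx). have := gsize_l Hx => ?.
    exact: ((IH G H x ltac:(lia)).1 GH Hhx).
  + have Hgy := leR GH Hy. have := gsize_r Hy => ?.
    exact: ((IH G y K ltac:(lia)).2.2 Hgy Hyk).
- move=> /lfE [[x Hx Hgx]|[y Hy Hyh]] HK.
  + have Hxk := leL HK Hx. have := gsize_l Hx => ?.
    exact: ((IH G x K ltac:(lia)).2.1 Hgx Hxk).
  + apply: (LfR Hy). have := gsize_r Hy => ?.
    exact: ((IH y H K ltac:(lia)).1 Hyh HK).
Qed.

Lemma le_trans G H K : le G H -> le H K -> le G K.
Proof. exact: (le_trans_all (leqnn _)).1. Qed.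
Lemma le_lf_trans G H K : le G H -> lf H K -> lf G K.
Proof. exact: (le_trans_all (leqnn _)).2.1. Qed.
Lemma lf_le_trans G H K : lf G H -> le H K -> lf G K.
Proof. exact: (le_trans_all (leqnn _)).2.2. Qed.

Lemma In_map (f : game -> game) s x :
  List.In x (map f s) <-> exists2 y, List.In y s & x = f y.
Proof.
elim: s x => [|y s IH] x /=; first by split => // [[]].
split.
- case=> [<-|Hx]; first by exists y; auto.
  have [z Hz ->] := (proj1 (IH x)) Hx. by exists z; auto.
- case=> z [<-|Hz] ->; first by left.
  right; apply IH; by exists z.
Qed.

Lemma In_cat (s t : seq game) x : List.In x (s ++ t) <-> List.In x s \/ List.In x t.
Proof. elim: s => [|y s IH] /=; [tauto | rewrite IH; tauto]. Qed.

Lemma In_map_f (f : game -> game) s y : List.In y s -> List.In (f y) (map f s).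
Proof. by move=> H; apply/In_map; exists y. Qed.

Lemma addL G H : lefts (add G H) = map (fun g => add g H) (lefts G) ++ map (add G) (lefts H).
Proof. by case: G; case: H. Qed.
Lemma addR G H : rights (add G H) = map (fun g => add g H) (rights G) ++ map (add G) (rights H).
Proof. by case: G; case: H. Qed.
Lemma negL G : lefts (neg G) = map neg (rights G).
Proof. by case: G. Qed.
Lemma negR G : rights (neg G) = map neg (lefts G).
Proof. by case: G. Qed.

Lemma In_addL G H x : List.In x (lefts (add G H)) <->
  (exists2 g, List.In g (lefts G) & x = add g H) \/ (exists2 h, List.In h (lefts H) & x = add G h).
Proof. by rewrite addL In_cat !In_map. Qed.
Lemma In_addR G H x : List.In x (rights (add G H)) <->
  (exists2 g, List.In g (rights G) & x = add g H) \/ (exists2 h, List.In h (rights H) & x = add G h).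
Proof. by rewrite addR In_cat !In_map. Qed.

Lemma add_mono_all n : forall G H K, gsize G + gsize H + gsize K <= n ->
  (le G H -> le (add G K) (add H K)) /\ (lf G H -> lf (add G K) (add H K)).
Proof.
elim: n => [|n IH] G H K Hs; first by have := gsize_pos G; lia.
split.
- move=> GH; constructor.
  + move=> x /In_addL [[g Hg ->]|[k Hk ->]].
    * have := gsize_l Hg => ?. exact: ((IH g H K ltac:(lia)).2 (leL GH Hg)).
    * have := gsize_l Hk => ?. apply: (LfL (x := add H k)).
        by apply/In_addL; right; exists k.
      exact: ((IH G H k ltac:(lia)).1 GH).
  + move=> y /In_addR [[h Hh ->]|[k Hk ->]].
    * have := gsize_r Hh => ?. exact: ((IH G h K ltac:(lia)).2 (leR GH Hh)).
    * have := gsize_r Hk => ?. apply: (LfR (y := add G k)).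
        by apply/In_addR; right; exists k.
      exact: ((IH G H k ltac:(lia)).1 GH).
- move=> /lfE [[x Hx Hgx]|[y Hy Hyh]].
  + have := gsize_l Hx => ?. apply: (LfL (x := add x K)).
      by apply/In_addL; left; exists x.
    exact: ((IH G x K ltac:(lia)).1 Hgx).
  + have := gsize_r Hy => ?. apply: (LfR (y := add y K)).
      by apply/In_addR; left; exists y.
    exact: ((IH y H K ltac:(lia)).1 Hyh).
Qed.

Lemma add_mono G H K : le G H -> le (add G K) (add H K).
Proof. exact: (add_mono_all (leqnn _)).1. Qed.

Lemma add_neg_all n : forall G, gsize G <= n ->
  le (add G (neg G)) zero /\ le zero (add G (neg G)).
Proof.
elim: n => [|n IH] G Hs; first by have := gsize_pos G; lia.
split; constructor => //.
- move=> x /In_addL [[g Hg ->]|[k Hk ->]].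
  + have := gsize_l Hg => ?. apply: (LfR (y := add g (neg g))).
      apply/In_addR; right; exists (neg g) => //. rewrite negR. exact: In_map_f.
    exact: (IH g ltac:(lia)).1.
  + move: Hk; rewrite negL => /In_map [h Hh ->].
    have := gsize_r Hh => ?. apply: (LfR (y := add h (neg h))).
      apply/In_addR; left; exists h => //.
    exact: (IH h ltac:(lia)).1.
- move=> y /In_addR [[h Hh ->]|[k Hk ->]].
  + have := gsize_r Hh => ?. apply: (LfL (x := add h (neg h))).
      apply/In_addL; right; exists (neg h) => //. rewrite negL. exact: In_map_f.
    exact: (IH h ltac:(lia)).2.
  + move: Hk; rewrite negR => /In_map [g Hg ->].
    have := gsize_l Hg => ?. apply: (LfL (x := add g (neg g))).
      apply/In_addL; left; exists g => //.
    exact: (IH g ltac:(lia)).2.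
Qed.

Lemma ge0_noRFW X : le zero X -> ~ right_first_wins X.
Proof.
move=> H W; elim: W H => G GR HGR _ IH H0.
case/lfE: (leR H0 HGR) => [[x Hx Hx0]|[y []]].
exact: (IH x Hx Hx0).
Qed.

Lemma le0_noLFW X : le X zero -> ~ left_first_wins X.
Proof.
move=> H W; elim: W H => G GL HGL _ IH H0.
case/lfE: (leL H0 HGL) => [[x []]|[y Hy Hy0]].
exact: (IH y Hy Hy0).
Qed.

Definition eqv G H := le G H /\ le H G.

Lemma eqv_refl G : eqv G G.
Proof. split; exact: le_refl. Qed.
Lemma eqv_sym G H : eqv G H -> eqv H G.
Proof. by case. Qed.
Lemma eqv_trans G H K : eqv G H -> eqv H K -> eqv G K.
Proof. case=> ? ? [? ?]; split; apply: le_trans; eauto. Qed.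

Lemma game_eq_of_eqv G H : eqv G H -> game_eq G H.
Proof.
case=> GH HG; have [N1 N2] := add_neg_all (leqnn _) (G := H).
split.
- apply: le0_noLFW. apply: le_trans N1. exact: add_mono.
- apply: ge0_noRFW. apply: le_trans N2 _. exact: add_mono.
Qed.

Definition opts (s : bool) (G : game) := if s then lefts G else rights G.

Lemma eqv_cong G H :
  (forall s x, List.In x (opts s G) -> exists2 y, List.In y (opts s H) & eqv x y) ->
  (forall s y, List.In y (opts s H) -> exists2 x, List.In x (opts s G) & eqv x y) ->
  eqv G H.
Proof.
move=> H1 H2; split; constructor.
- move=> x /(H1 true) [y Hy [Hxy _]]; exact: LfL Hy Hxy.
- move=> y /(H2 false) [x Hx [Hxy _]]; exact: LfR Hx Hxy.
- move=> y /(H2 true) [x Hx [_ Hyx]]; exact: LfL Hx Hyx.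
- move=> x /(H1 false) [y Hy [_ Hyx]]; exact: LfR Hy Hyx.
Qed.


Fixpoint U k := match k with 0 => star | k'.+1 => Game [:: zero; U k'] [:: zero] end.
Fixpoint Dn k := match k with 0 => star | k'.+1 => Game [:: zero] [:: zero; Dn k'] end.
Definition T k := Game [:: zero; U k] [:: zero; U k].
Definition T' k := Game [:: zero; Dn k] [:: zero; Dn k].
Definition W c := if c is 0 then zero else if odd c then star else star2.
Fixpoint VEf a b := match a, b with
  | a'.+1, b'.+1 => VEf a' b' | a'.+1, 0 => U a' | 0, b'.+1 => Dn b' | 0, 0 => star2 end.
Fixpoint VOf a b := match a, b with
  | a'.+1, b'.+1 => VOf a' b' | a'.+1, 0 => T a' | 0, b'.+1 => T' b' | 0, 0 => star end.
Definition Val a b c := match a, b with 0, 0 => W c | _, _ => if odd c then VOf a b else VEf a b end.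

Definition Qopt (s : bool) a b c :=
  zero :: (if s then (if 0 < a then [:: Val a.-1 b c] else [::])
           else (if 0 < b then [:: Val a b.-1 c] else [::])) ++
          (if 0 < c then [:: Val a b c.-1] else [::]).
Definition Q a b c := Game (Qopt true a b c) (Qopt false a b c).

Lemma VEf_gt b d : VEf (b + d.+1) b = U d.
Proof. by elim: b => //= b IH; rewrite addSn. Qed.
Lemma VOf_gt b d : VOf (b + d.+1) b = T d.
Proof. by elim: b => //= b IH; rewrite addSn. Qed.
Lemma VEf_lt a d : VEf a (a + d.+1) = Dn d.
Proof. by elim: a => //= a IH; rewrite addSn. Qed.
Lemma VOf_lt a d : VOf a (a + d.+1) = T' d.
Proof. by elim: a => //= a IH; rewrite addSn. Qed.
Lemma VEf_eq a : VEf a a = star2.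
Proof. by elim: a. Qed.
Lemma VOf_eq a : VOf a a = star.
Proof. by elim: a. Qed.

Lemma Val_gt b d c : Val (b + d.+1) b c = if odd c then T d else U d.
Proof. by rewrite /Val VOf_gt VEf_gt addnS. Qed.
Lemma Val_lt a d c : Val a (a + d.+1) c = if odd c then T' d else Dn d.
Proof. by rewrite /Val VOf_lt VEf_lt addnS; case: a. Qed.
Lemma Val_eq a c : Val a.+1 a.+1 c = if odd c then star else star2.
Proof. by rewrite /Val /= VOf_eq VEf_eq. Qed.
Lemma Val_00 c : Val 0 0 c = W c.
Proof. by []. Qed.

Arguments Val : simpl never.

Lemma lf_memL x H : List.In x (lefts H) -> lf x H.
Proof. move=> Hx; exact: LfL Hx (le_refl x). Qed.
Lemma lf_memR x H : List.In H (rights x) -> lf x H.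
Proof. move=> Hx; exact: LfR Hx (le_refl H). Qed.

Ltac inl := simpl; repeat (first [left; reflexivity | right]).

Lemma lf_S2_S : lf star2 star.
Proof. apply: lf_memR; inl. Qed.
Lemma lf_S_S2 : lf star star2.
Proof. apply: lf_memL; inl. Qed.

Ltac optsI := let x := fresh "x" in let Hx := fresh "Hx" in
  move=> x Hx; simpl in Hx; repeat destruct Hx as [<-|Hx]; try contradiction.

Lemma T_le_U k : le (T k) (U k.+1).
Proof. constructor; optsI; solve [apply: lf_memL; inl | apply: lf_memR; inl]. Qed.
Lemma Dn_le_T' k : le (Dn k.+1) (T' k).
Proof. constructor; optsI; solve [apply: lf_memL; inl | apply: lf_memR; inl]. Qed.
Lemma lf_TT k : lf (T k) (T k.+1).
Proof. apply: (LfL (x := U k.+1)); [inl | exact: T_le_U]. Qed.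
Lemma lf_T'T' k : lf (T' k.+1) (T' k).
Proof. apply: (LfR (y := Dn k.+1)); [inl | exact: Dn_le_T']. Qed.

Ltac slf := first [ solve [apply: lf_memL; inl] | solve [apply: lf_memR; inl] | exact: lf_S2_S | exact: lf_S_S2
  | exact: lf_TT | exact: lf_T'T' ].
Ltac fin := split; constructor; optsI; slf.


Lemma Val_ltE a b d c : b = a + d.+1 -> Val a b c = if odd c then T' d else Dn d.
Proof. by move=> ->; rewrite Val_lt. Qed.
Lemma Val_gtE a b d c : a = b + d.+1 -> Val a b c = if odd c then T d else U d.
Proof. by move=> ->; rewrite Val_gt. Qed.
Lemma Val_eqE a b c : a = b -> 0 < a -> Val a b c = if odd c then star else star2.
Proof. by move=> <-; case: a => // a _; rewrite Val_eq. Qed.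
Lemma Val_00E a b c : a = 0 -> b = 0 -> Val a b c = W c.
Proof. by move=> -> ->. Qed.

Ltac nv1 x y z t :=
  first [ rewrite (@Val_00E x y z ltac:(lia) ltac:(lia))
        | rewrite (@Val_eqE x y z ltac:(lia) ltac:(lia))
        | rewrite (@Val_ltE x y t z ltac:(lia))
        | rewrite (@Val_ltE x y t.+1 z ltac:(lia))
        | rewrite (@Val_ltE x y t.+2 z ltac:(lia))
        | rewrite (@Val_ltE x y 0 z ltac:(lia))
        | rewrite (@Val_ltE x y 1 z ltac:(lia))
        | rewrite (@Val_ltE x y 2 z ltac:(lia))
        | rewrite (@Val_gtE x y t z ltac:(lia))
        | rewrite (@Val_gtE x y t.+1 z ltac:(lia))
        | rewrite (@Val_gtE x y t.+2 z ltac:(lia))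
        | rewrite (@Val_gtE x y 0 z ltac:(lia))
        | rewrite (@Val_gtE x y 1 z ltac:(lia))
        | rewrite (@Val_gtE x y 2 z ltac:(lia)) ].
Ltac nv t := repeat match goal with |- context [Val ?x ?y ?z] => nv1 x y z t end.
Ltac dec_if := repeat match goal with
  | |- context [if ?P then _ else _] =>
    let E := fresh "E" in
    first [ have E : P = true by lia | have E : P = false by lia ]; rewrite E; clear E
  end.

Lemma QB_lt a d c : eqv (Q a (a + d.+1) c) (Val a (a + d.+1) c).
Proof.
rewrite /Q /Qopt.
case: a => [|a']; case: d => [|d']; case: c => [|c'].
all: nv d'; dec_if; rewrite /=.
all: try case: (odd c'); rewrite /=.
all: fin.
Qed.

Lemma QB_gt b d c : eqv (Q (b + d.+1) b c) (Val (b + d.+1) b c).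
Proof.
rewrite /Q /Qopt.
case: b => [|b']; case: d => [|d']; case: c => [|c'].
all: nv d'; dec_if; rewrite /=.
all: try case: (odd c'); rewrite /=.
all: fin.
Qed.

Lemma QB_eq a c : 0 < a + c -> eqv (Q a a c) (Val a a c).
Proof.
rewrite /Q /Qopt.
case: a => [|a']; case: c => [|c'] // _.
all: try case: c' => [|c'].
all: nv 0; dec_if; rewrite /W /=.
all: try case: (odd c'); rewrite /=.
all: fin.
Qed.

Lemma QB a b c : 0 < a + b + c -> eqv (Q a b c) (Val a b c).
Proof.
case: (ltngtP a b) => [ltab|ltba|<-] Hp.
- have -> : b = a + (b - a - 1).+1 by lia. exact: QB_lt.
- have -> : a = b + (a - b - 1).+1 by lia. exact: QB_gt.
- apply: QB_eq; lia.
Qed.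


Lemma cong_F2 l1 l2 : List.Forall2 eqv l1 l2 ->
  (forall x, List.In x l1 -> exists2 y, List.In y l2 & eqv x y) /\
  (forall y, List.In y l2 -> exists2 x, List.In x l1 & eqv x y).
Proof.
elim=> [|x y l1' l2' Hxy _ [IH1 IH2]]; first by split => ? [].
split.
- move=> z /= [<-|Hz]; first by exists y; auto.
  by have [w Hw Hzw] := IH1 z Hz; exists w; auto.
- move=> z /= [<-|Hz]; first by exists x; auto.
  by have [w Hw Hzw] := IH2 z Hz; exists w; auto.
Qed.

Lemma cong_pw l1 r1 l2 r2 : List.Forall2 eqv l1 l2 -> List.Forall2 eqv r1 r2 ->
  eqv (Game l1 r1) (Game l2 r2).
Proof.
move=> /cong_F2 [L1 L2] /cong_F2 [R1 R2]; apply: eqv_cong => -[] /=; auto.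
Qed.

Lemma cong22 a b c d a' b' c' d' : eqv a a' -> eqv b b' -> eqv c c' -> eqv d d' ->
  eqv (Game [:: a; b] [:: c; d]) (Game [:: a'; b'] [:: c'; d']).
Proof. by move=> *; apply: cong_pw; repeat apply: List.Forall2_cons. Qed.

Lemma add_zero_r G : eqv (add G zero) G.
Proof.
have H: forall n G, gsize G <= n -> eqv (add G zero) G.
  elim=> [|n IH] G0 Hs; first by have := gsize_pos G0; lia.
  apply: eqv_cong => s x.
  - case: s => /=; [move/In_addL | move/In_addR] => -[[g Hg ->]|[h []]];
      exists g => //; apply: IH;
      [have := gsize_l Hg | have := gsize_r Hg]; lia.
  - case: s => /= Hx; exists (add x zero).
    + by apply/In_addL; left; exists x.
    + apply: IH; have := gsize_l Hx; lia.
    + by apply/In_addR; left; exists x.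
    + apply: IH; have := gsize_r Hx; lia.
exact: H (leqnn _).
Qed.

Lemma add_star_star : eqv (add star star) zero.
Proof.
change (eqv (Game [:: star; star] [:: star; star]) zero).
fin.
Qed.

Lemma upgen Uk Y : rights Y = [:: star] ->
  eqv (Game [:: Uk; Y] [:: zero; Y]) (Game [:: zero; Uk] [:: zero]).
Proof.
move=> HY.
have Z : le zero Y.
  constructor; first by move=> ? [].
  rewrite HY => y [<-|[]]; apply: lf_memL; inl.
have S1 : le star (Game [:: zero; Uk] [:: zero]).
  constructor; optsI; slf.
split; constructor; optsI; try slf.
- apply: (LfR (y := star)); [by rewrite HY; left | exact: S1].
- apply: (LfL (x := Y)); [inl | exact: Z].
- apply: (LfR (y := zero)); [inl | exact: Z].
Qed.

Lemma downgen Dk Y : lefts Y = [:: star] ->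
  eqv (Game [:: zero; Y] [:: Dk; Y]) (Game [:: zero] [:: zero; Dk]).
Proof.
move=> HY.
have Z : le Y zero.
  constructor; last by move=> ? [].
  rewrite HY => y [<-|[]]; apply: lf_memR; inl.
have S1 : le (Game [:: zero] [:: zero; Dk]) star.
  constructor; optsI; slf.
split; constructor; optsI; try slf.
- apply: (LfL (x := zero)); [inl | exact: Z].
- apply: (LfR (y := Y)); [inl | exact: Z].
- apply: (LfL (x := star)); [by rewrite HY; left | exact: S1].
Qed.

Lemma U_upn k : eqv (U k.+1) (add (upn k.+1) star).
Proof.
apply: eqv_sym; elim: k => [|k IH].
- change (eqv (Game [:: add zero star; add up zero] [:: add star star; add up zero]) (U 1)).
  apply: eqv_trans; last exact: (@upgen star up erefl).
  apply: cong22; try exact: add_zero_r; try exact: add_star_star; exact: eqv_refl.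
- change (eqv (Game [:: add (upn k.+1) star; add (upn k.+2) zero]
                    [:: add star star; add (upn k.+2) zero]) (U k.+2)).
  apply: eqv_trans; last exact: (@upgen (U k.+1) (upn k.+2) erefl).
  apply: cong22; try exact: add_zero_r; try exact: add_star_star; exact: IH.
Qed.

Lemma Dn_downn k : eqv (Dn k.+1) (add (downn k.+1) star).
Proof.
apply: eqv_sym; elim: k => [|k IH].
- change (eqv (Game [:: add star star; add down zero] [:: add zero star; add down zero]) (Dn 1)).
  apply: eqv_trans; last exact: (@downgen star down erefl).
  apply: cong22; try exact: add_zero_r; try exact: add_star_star; exact: eqv_refl.
- change (eqv (Game [:: add star star; add (downn k.+2) zero]
                    [:: add (downn k.+1) star; add (downn k.+2) zero]) (Dn k.+2)).
  apply: eqv_trans; last exact: (@downgen (Dn k.+1) (downn k.+2) erefl).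
  apply: cong22; try exact: add_zero_r; try exact: add_star_star; exact: IH.
Qed.


Lemma In_mapg (T : Type) (f : T -> game) s x :
  List.In x (map f s) <-> exists2 y, List.In y s & x = f y.
Proof.
elim: s x => [|y s IH] x /=; first by split => // [[]].
split.
- case=> [<-|Hx]; first by exists y; auto.
  have [z Hz ->] := (proj1 (IH x)) Hx. by exists z; auto.
- case=> z [<-|Hz] ->; first by left.
  right; apply IH; by exists z.
Qed.

Lemma In_mem (T : eqType) (x : T) s : List.In x s <-> x \in s.
Proof.
elim: s => [|y s IH] //=; rewrite in_cons; split.
- by case=> [->|/IH ->]; rewrite ?eqxx ?orbT.
- by case/orP => [/eqP ->|/IH]; auto.
Qed.

Lemma filter_false (T : Type) (p : pred T) s : (forall v, p v = false) -> filter p s = [::].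
Proof. by move=> H; elim: s => //= v s ->; rewrite H. Qed.

Section Star.
Variables (L : finType) (col : L -> color).
Notation V := (option L).
Notation dg := (dom_game_from (@star_adj L) (star_col col)).
Notation N := (cnbhd (@star_adj L)).

Lemma N_None : N None = setT.
Proof. by apply/setP => u; rewrite !inE /star_adj /=; case: u. Qed.
Lemma N_Some l : N (Some l) = [set Some l; None].
Proof. by apply/setP => u; rewrite !inE /star_adj /=; case: u. Qed.

Definition cnt (p : color -> bool) (D : {set V}) := #|[pred l | p (col l) && (Some l \notin D)]|.

Definition side (s : bool) := if s then alice_col else bob_col.

Lemma In_dg s k D x : List.In x (opts s (dg k.+1 D)) <->
  exists v, [/\ side s (star_col col v), ~~ (N v \subset D) & x = dg k (D :|: N v)].
Proof.
have E : forall (e : seq V) (p : pred V) (f : V -> game), (forall v, v \in e) ->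
  List.In x [seq f v | v <- e & p v] <-> exists2 v, p v & x = f v.
  move=> e p f He; rewrite In_mapg; split.
  - case=> v /In_mem; rewrite mem_filter => /andP [H1 _] ->; by exists v.
  - case=> v H1 ->; exists v => //; apply/In_mem; by rewrite mem_filter H1 He.
case: s => /=; (rewrite E; last by move=> ?; rewrite mem_enum); split => [[v /andP [H1 H2] ->]|[v [H1 H2 ->]]];
  by exists v => //; rewrite H1 H2.
Qed.

Lemma all_dom k (D : {set V}) : (forall v, N v \subset D) -> dg k D = zero.
Proof.
move=> H; case: k => //= k.
by rewrite !filter_false // => v; rewrite H andbF.
Qed.

Lemma cnt_step p (D : {set V}) l : Some l \notin D ->
  cnt p D = p (col l) + cnt p (D :|: [set Some l; None]).
Proof.
move=> Hl; rewrite /cnt (cardD1 l) inE /= Hl andbT; congr (_ + _).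
apply: eq_card => l'; rewrite !inE.
case: (eqVneq l' l) => [->|ne] /=; first by rewrite eqxx orbT andbF.
have -> : (Some l' == Some l) = false by apply/eqP => -[]; apply/eqP.
by rewrite orbF.
Qed.

Lemma playable_Some (D : {set V}) l : Some l \notin D -> ~~ (N (Some l) \subset D).
Proof.
move=> Hl; apply/negP => /subsetP H; move: (H (Some l)); rewrite N_Some !inE eqxx /=.
by move=> /(_ isT); apply/negP.
Qed.

Lemma notin_of_playable (D : {set V}) l : None \in D -> ~~ (N (Some l) \subset D) -> Some l \notin D.
Proof.
move=> HN; apply: contra => Hl; apply/subsetP => u; rewrite N_Some !inE.
by case/orP => /eqP ->.
Qed.

Lemma pick_l p (D : {set V}) : 0 < cnt p D -> exists l, p (col l) /\ Some l \notin D.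
Proof. by case/card_gt0P => l; rewrite inE => /andP [H1 H2]; exists l. Qed.

Lemma Qopt_In s a b c y : List.In y (Qopt s a b c) ->
  y = zero \/ (s /\ 0 < a /\ y = Val a.-1 b c) \/ (~~ s /\ 0 < b /\ y = Val a b.-1 c) \/
  (0 < c /\ y = Val a b c.-1).
Proof.
rewrite /Qopt; case: s; case: (0 < a); case: (0 < b); case: (0 < c) => /=;
  intuition (auto; subst; auto 6).
Qed.

Lemma opts_Q s a b c : opts s (Q a b c) = Qopt s a b c.
Proof. by case: s. Qed.

Lemma Qopt_0 s a b c : List.In zero (Qopt s a b c).
Proof. by left. Qed.
Lemma Qopt_A a b c : 0 < a -> List.In (Val a.-1 b c) (Qopt true a b c).
Proof. by rewrite /Qopt => ->; right; left. Qed.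
Lemma Qopt_B a b c : 0 < b -> List.In (Val a b.-1 c) (Qopt false a b c).
Proof. by rewrite /Qopt => ->; right; left. Qed.
Lemma Qopt_C s a b c : 0 < c -> List.In (Val a b c.-1) (Qopt s a b c).
Proof. rewrite /Qopt => ->; right; apply/In_cat; right; by left. Qed.

Arguments Qopt : simpl never.

Lemma main k : forall D : {set V}, None \in D ->
  cnt isA D + cnt isB D + cnt isC D < k ->
  eqv (dg k D) (Val (cnt isA D) (cnt isB D) (cnt isC D)).
Proof.
elim: k => [|k IH] D HN Hk //.
have notin_some : forall l, Some l \notin D -> 0 < cnt isA D + cnt isB D + cnt isC D.
  move=> l Hl; rewrite (cnt_step isA Hl) (cnt_step isB Hl) (cnt_step isC Hl).
  case: (col l) => /=; lia.
case: (posnP (cnt isA D + cnt isB D + cnt isC D)) => [H0|Hpos].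
  have HD : forall l, Some l \in D.
    by move=> l; apply/negPn/negP => /notin_some; lia.
  have Hall : forall v, N v \subset D.
    case=> [l|]; [rewrite N_Some | rewrite N_None]; apply/subsetP => u; rewrite ?inE.
      by case/orP => /eqP ->.
    by case: u.
  rewrite all_dom //.
  have -> : cnt isA D = 0 by lia. have -> : cnt isB D = 0 by lia.
  have -> : cnt isC D = 0 by lia.
  exact: eqv_refl.
have opt_l : forall l, Some l \notin D ->
  eqv (dg k (D :|: N (Some l)))
      (Val (cnt isA D - isA (col l)) (cnt isB D - isB (col l)) (cnt isC D - isC (col l))).
  move=> l Hl; rewrite (cnt_step isA Hl) (cnt_step isB Hl) (cnt_step isC Hl) !addKn N_Some.
  apply: IH; first by rewrite !inE eqxx !orbT.
  move: Hk; rewrite (cnt_step isA Hl) (cnt_step isB Hl) (cnt_step isC Hl).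
  case: (col l) => /=; lia.
have someout : exists l, Some l \notin D.
  case: (posnP (cnt isA D)) => [?|/pick_l [l [_ ?]]]; last by exists l.
  case: (posnP (cnt isB D)) => [?|/pick_l [l [_ ?]]]; last by exists l.
  case: (posnP (cnt isC D)) => [?|/pick_l [l [_ ?]]]; last by exists l.
  lia.
have optN : forall s, List.In zero (opts s (dg k.+1 D)).
  move=> s; apply/In_dg; exists None; split.
  - by case: s.
  - rewrite N_None; apply/negP => /subsetP H; case: someout => l; apply/negP/negPn.
    exact: H.
  - by rewrite N_None setUT all_dom // => v; apply/subsetP.
apply: eqv_trans (QB Hpos); apply: eqv_cong => s x; rewrite opts_Q.
- case/In_dg => v [Hs Hv ->]; case: v Hs Hv => [l|] Hs Hv; last first.
    exists zero; first exact: Qopt_0.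
    by rewrite N_None setUT all_dom ?eqv_refl // => v; apply/subsetP.
  have Hl := notin_of_playable HN Hv.
  have Hx := opt_l l Hl; rewrite /= in Hs.
  move: Hs Hx; case E: (col l) => Hs; rewrite /= !subn0 => Hx.
  + case: s Hs => // _. eexists; last exact: Hx.
    rewrite subn1; apply: Qopt_A.
    by rewrite /cnt (cardD1 l) inE /= E Hl.
  + case: s Hs => // _. eexists; last exact: Hx.
    rewrite subn1; apply: Qopt_B.
    by rewrite /cnt (cardD1 l) inE /= E Hl.
  + eexists; last exact: Hx.
    rewrite subn1; apply: Qopt_C.
    by rewrite /cnt (cardD1 l) inE /= E Hl.
- case/Qopt_In => [->|[[Hs [Ha ->]]|[[Hs [Hb ->]]|[Hc ->]]]].
  + exists zero; [exact: optN | exact: eqv_refl].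
  + case: (pick_l Ha) => l [El Hl].
    exists (dg k (D :|: N (Some l))).
      apply/In_dg; exists (Some l); split => //; last exact: playable_Some.
      by move: Hs El; case: s => //= _; case: (col l).
    have := opt_l l Hl; move: El; case: (col l) => //= _; by rewrite subn1 !subn0.
  + case: (pick_l Hb) => l [El Hl].
    exists (dg k (D :|: N (Some l))).
      apply/In_dg; exists (Some l); split => //; last exact: playable_Some.
      by move: Hs El; case: s => //= _; case: (col l).
    have := opt_l l Hl; move: El; case: (col l) => //= _; by rewrite subn1 !subn0.
  + case: (pick_l Hc) => l [El Hl].
    exists (dg k (D :|: N (Some l))).
      apply/In_dg; exists (Some l); split => //; last exact: playable_Some.
      by move: El; case: s => /=; case: (col l).
    have := opt_l l Hl; move: El; case: (col l) => //= _; by rewrite subn1 !subn0.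
Qed.

End Star.


Lemma map_filter_ext (T : Type) (f g : T -> game) (p q : pred T) s :
  f =1 g -> p =1 q -> map f (filter p s) = map g (filter q s).
Proof. by move=> Hf Hp; elim: s => //= v s IH; rewrite Hp; case: (q v) => //=; rewrite Hf IH. Qed.

Section Star2.
Variables (L : finType) (col : L -> color).
Notation V := (option L).
Notation dg := (dom_game_from (@star_adj L) (star_col col)).
Notation N := (cnbhd (@star_adj L)).

Lemma dg_set0 k : 0 < #|L| -> dg k.+1 set0 = dg k.+1 [set None].
Proof.
move=> /card_gt0P [l0 _].
have Hf : forall v : V, (set0 :|: N v) = ([set None] :|: N v).
  move=> v; rewrite set0U; apply/esym/setUidPr; rewrite sub1set.
  by case: v => [l|]; rewrite ?N_Some ?N_None !inE ?orbT.
have Hp : forall v : V, ~~ (N v \subset set0) = ~~ (N v \subset [set None]).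
  move=> v; case: v => [l|]; [rewrite N_Some | rewrite N_None].
  - have H1 : ~~ ([set Some l; None] \subset (set0 : {set V})).
      by apply/negP => /subsetP /(_ (Some l)); rewrite !inE eqxx => /(_ isT).
    have H2 : ~~ ([set Some l; None] \subset [set None]).
      by apply/negP => /subsetP /(_ (Some l)); rewrite !inE eqxx => /(_ isT).
    by rewrite H1 H2.
  - have H1 : ~~ ([set: V] \subset (set0 : {set V})).
      by apply/negP => /subsetP /(_ (Some l0)); rewrite !inE => /(_ isT).
    have H2 : ~~ ([set: V] \subset [set None]).
      by apply/negP => /subsetP /(_ (Some l0)); rewrite !inE => /(_ isT).
    by rewrite H1 H2.
rewrite /=; congr Game; apply: map_filter_ext => v; by rewrite ?Hf ?Hp.
Qed.

Lemma cnt_bound (D : {set V}) : cnt col isA D + cnt col isB D + cnt col isC D <= #|L|.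
Proof.
have E : forall p, cnt col p D = \sum_(l : L) (p (col l) && (Some l \notin D) : nat).
  move=> p; rewrite /cnt -sum1_card big_mkcond /=; apply: eq_bigr => l _.
  by rewrite inE; case: (_ && _).
rewrite !E -!big_split /=.
apply: (@leq_trans (\sum_(l : L) 1)); last by rewrite sum1_card.
by apply: leq_sum => l _; case: (col l); case: (Some l \notin D).
Qed.

Lemma star_eqv : 0 < #|L| ->
  eqv (star_game col) (Val #|[pred l | isA (col l)]| #|[pred l | isB (col l)]| #|[pred l | isC (col l)]|).
Proof.
move=> HL; rewrite /star_game /dom_game card_option dg_set0 //.
have Ec : forall p, cnt col p [set None] = #|[pred l | p (col l)]|.
  by move=> p; apply: eq_card => l; rewrite !inE /= andbT.
rewrite -!Ec; apply: main; first by rewrite inE.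
by have := cnt_bound [set None]; lia.
Qed.
End Star2.

Lemma Val_nz a b c : a + b != 0 -> Val a b c = if odd c then VOf a b else VEf a b.
Proof. by case: a; case: b. Qed.


Lemma sub_count n (col : 'I_n -> color) (p : color -> bool) :
  (forall c, p c -> ~~ isC c) ->
  #|[pred x : {i : 'I_n | ~~ isC (col i)} | p (col (val x))]| = #|[pred i | p (col i)]|.
Proof.
move=> Hp; rewrite -(card_image val_inj); apply: eq_card => i; rewrite inE.
apply/imageP/idP => [[x Hx ->]|Hi]; first by move: Hx; rewrite inE.
by exists (exist _ i (Hp _ Hi)); rewrite ?inE.
Qed.

Theorem theorem9 (n : nat) (col : 'I_n -> color) :
  let a := #|[pred i | isA (col i)]| in
  let b := #|[pred i | isB (col i)]| in
  let c := #|[pred i | isC (col i)]| in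
  (1 <= c)%N -> (1 <= a + b)%N ->
  (~~ odd c ->
     game_eq (star_game col)
       (star_game (fun x : {i : 'I_n | ~~ isC (col i)} => col (val x)))) /\
  (odd c ->
     (a = b -> game_eq (star_game col) star) /\
     ((a == b.+1) || (b == a.+1) -> game_eq (star_game col) star2) /\
     ((b + 2 <= a)%N ->
        game_eq (star_game col)
          (Game [:: zero; add (upn (a - b - 1)) star]
                [:: zero; add (upn (a - b - 1)) star])) /\
     ((a + 2 <= b)%N ->
        game_eq (star_game col)
          (Game [:: zero; add (downn (b - a - 1)) star]
                [:: zero; add (downn (b - a - 1)) star]))).
Proof.
move=> a b c Hc Hab.
have Hn : 0 < #|'I_n| by have : c <= #|'I_n| := max_card _; lia.
have H1 := star_eqv col Hn.
change (eqv (star_game col) (Val a b c)) in H1.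
have Hab0 : a + b != 0 by lia.
rewrite Val_nz // in H1.
split.
  move=> Hev; rewrite (negbTE Hev) in H1.
  have Ea : #|[pred x : {i : 'I_n | ~~ isC (col i)} | isA (col (val x))]| = a by apply: sub_count; case.
  have Eb : #|[pred x : {i : 'I_n | ~~ isC (col i)} | isB (col (val x))]| = b by apply: sub_count; case.
  have Ec : #|[pred x : {i : 'I_n | ~~ isC (col i)} | isC (col (val x))]| = 0.
    by apply: eq_card0 => -[i Hi]; rewrite !inE /=; apply/negbTE.
  have HL' : 0 < #|{: {i : 'I_n | ~~ isC (col i)}}|.
    case: (posnP a) => Ha.
      have : 0 < b by lia. rewrite -Eb => /card_gt0P [x _]; apply/card_gt0P; by exists x.
    move: Ha; rewrite -Ea => /card_gt0P [x _]; apply/card_gt0P; by exists x.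
  have H2 := star_eqv (fun x : {i : 'I_n | ~~ isC (col i)} => col (val x)) HL'.
  rewrite /= Ea Eb Ec Val_nz // in H2.
  apply: game_eq_of_eqv; exact: eqv_trans H1 (eqv_sym H2).
move=> Hodd; rewrite Hodd in H1.
split; [|split; [|split]].
- move=> Eab; rewrite Eab VOf_eq in H1; exact: game_eq_of_eqv H1.
- case/orP => /eqP E.
    rewrite E -addn1 VOf_gt in H1; exact: game_eq_of_eqv H1.
  rewrite E -addn1 VOf_lt in H1; exact: game_eq_of_eqv H1.
- move=> Hge.
  have E : a = b + (a - b - 2).+2 by lia.
  rewrite E VOf_gt in H1.
  have -> : a - b - 1 = (a - b - 2).+1 by lia.
  apply: game_eq_of_eqv; apply: eqv_trans H1 _.
  apply: cong22; [exact: eqv_refl | exact: U_upn | exact: eqv_refl | exact: U_upn].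
- move=> Hge.
  have E : b = a + (b - a - 2).+2 by lia.
  rewrite E VOf_lt in H1.
  have -> : b - a - 1 = (b - a - 2).+1 by lia.
  apply: game_eq_of_eqv; apply: eqv_trans H1 _.
  apply: cong22; [exact: eqv_refl | exact: Dn_downn | exact: eqv_refl | exact: Dn_downn].
Qed.
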